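(* Let $\mathsf{A}\in\mathcal{O}(\Omega,\mathcal{H})$ be a POVM and $\mathcal{J}\in\mathrm{Ins}(\Lambda,\mathcal{H},\mathcal{K})$ an instrument. Then $\mathsf{A}$ and $\mathcal{J}$ are compatible if and only if $\mathcal{J}\preceq\mathcal{I}^{\mathsf{A}}$, where $\mathcal{I}^{\mathsf{A}}$ is the Lüders instrument of $\mathsf{A}$.
   Context: All Hilbert spaces are finite-dimensional and complex, and all outcome sets are finite. A POVM $\mathsf{A}\in\mathcal{O}(\Omega,\mathcal{H})$ is a map $x\mapsto \mathsf{A}(x)$ from $\Omega$ to positive operators on $\mathcal{H}$ with $\sum_x \mathsf{A}(x)=I$. An instrument $\mathcal{J}\in\mathrm{Ins}(\Lambda,\mathcal{H},\mathcal{K})$ is a family $(\mathcal{J}_y)_{y\in\Lambda}$ of completely positive trace-nonincreasing linear maps $\mathcal{L}(\mathcal{H})\to\mathcal{L}(\mathcal{K})$ whose sum is trace preserving; its induced POVM $\mathsf{A}^{\mathcal{J}}$ is given by $\mathrm{tr}[\mathsf{A}^{\mathcal{J}}(y)\varrho]=\mathrm{tr}[\mathcal{J}_y(\varrho)]$. The Lüders instrument of $\mathsf{A}$ is $\mathcal{I}^{\mathsf{A}}\in\mathrm{Ins}(\Omega,\mathcal{H},\mathcal{H})$, $\mathcal{I}^{\mathsf{A}}_x(\varrho)=\sqrt{\mathsf{A}(x)}\varrho\sqrt{\mathsf{A}(x)}$. Postprocessing: $\mathcal{J}\preceq\mathcal{I}^{\mathsf{A}}$ if there exist instruments $\mathcal{R}^{(x)}\in\mathrm{Ins}(\Lambda,\mathcal{H},\mathcal{K})$,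 $x\in\Omega$, with $\mathcal{J}_y=\sum_x\mathcal{R}^{(x)}_y\circ\mathcal{I}^{\mathsf{A}}_x$ for all $y$. $\mathsf{A}$ and $\mathcal{J}$ are compatible if there exists an instrument $\mathcal{G}\in\mathrm{Ins}(\Omega\times\Lambda,\mathcal{H},\mathcal{K})$ with $\sum_x\mathcal{G}_{(x,y)}=\mathcal{J}_y$ for all $y$ and $\sum_y\mathsf{A}^{\mathcal{G}}(x,y)=\mathsf{A}(x)$ for all $x$. *)

(* Defs.v *)
(* Finite-dimensional quantum measurement theory:
   Hilbert spaces are C^n, operators are n x n matrices over a
   numClosedFieldType C (instantiated with the complex numbers R[i],
   R : realType, in the statement). *)
From HB Require Import structures.
From mathcomp Require Import all_boot all_order all_algebra.
From Stdlib Require Import ClassicalEpsilon.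
Set Implicit Arguments.
Unset Strict Implicit.
Unset Printing Implicit Defensive.
Import Order.TTheory GRing.Theory Num.Theory.
Local Open Scope ring_scope.

Section QDefs.
Variable C : numClosedFieldType.

Definition adjmx p q (A : 'M[C]_(p, q)) : 'M[C]_(q, p) := (map_mx Num.conj A)^T.

Definition psdmx p (A : 'M[C]_p) : Prop :=
  adjmx A = A /\ forall v : 'cV[C]_p, 0 <= (adjmx v *m A *m v) 0 0.

Definition povm (Omega : finType) n (A : Omega -> 'M[C]_n) : Prop :=
  (forall x, psdmx (A x)) /\ \sum_(x : Omega) A x = 1%:M.

Definition linear_map n m (f : 'M[C]_n -> 'M[C]_m) : Prop :=
  forall (a : C) (X Y : 'M[C]_n), f (a *: X + Y) = a *: f X + f Y.

(* amplification id_k (x) f, acting blockwise on k x k block matrices *)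
Definition ampl n m k (f : 'M[C]_n -> 'M[C]_m)
  (X : 'M[C]_(\sum_(i < k) (fun _ : 'I_k => n) i)) :
  'M[C]_(\sum_(i < k) (fun _ : 'I_k => m) i) :=
  \mxblock_(i < k, j < k) f (submxblock X i j).

Definition completely_positive n m (f : 'M[C]_n -> 'M[C]_m) : Prop :=
  forall (k : nat) (X : 'M[C]_(\sum_(i < k) (fun _ : 'I_k => n) i)),
    psdmx X -> psdmx (ampl f X).

Definition instrument (Lambda : finType) n m
  (J : Lambda -> 'M[C]_n -> 'M[C]_m) : Prop :=
  [/\ forall y, linear_map (J y),
      forall y, completely_positive (J y),
      forall y (rho : 'M[C]_n), psdmx rho -> \tr (J y rho) <= \tr rho
    & forall rho : 'M[C]_n, \tr (\sum_y J y rho) = \tr rho].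

(* induced POVM: tr[A^J(y) rho] = tr[J_y(rho)] for all rho; written out
   in matrix units: A^J(y)_{ij} = tr[J_y(E_{ji})]. *)
Definition induced_povm (Lambda : finType) n m
  (J : Lambda -> 'M[C]_n -> 'M[C]_m) (y : Lambda) : 'M[C]_n :=
  \matrix_(i, j) \tr (J y (delta_mx j i)).

(* the positive square root of a positive operator (unique, so the choice
   below picks it) *)
Definition psd_sqrt p (A : 'M[C]_p) : 'M[C]_p :=
  epsilon (inhabits 0) (fun B => psdmx B /\ B *m B = A).

Definition luders (Omega : finType) n (A : Omega -> 'M[C]_n)
  (x : Omega) (rho : 'M[C]_n) : 'M[C]_n :=
  psd_sqrt (A x) *m rho *m psd_sqrt (A x).

Definition postprocessing (Omega Lambda : finType) n m
  (J : Lambda -> 'M[C]_n -> 'M[C]_m) (I : Omega -> 'M[C]_n -> 'M[C]_n) : Prop :=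
  exists Rr : Omega -> Lambda -> 'M[C]_n -> 'M[C]_m,
    (forall x, instrument (Rr x)) /\
    (forall y (rho : 'M[C]_n), J y rho = \sum_(x : Omega) Rr x y (I x rho)).

Definition compatible (Omega Lambda : finType) n m
  (A : Omega -> 'M[C]_n) (J : Lambda -> 'M[C]_n -> 'M[C]_m) : Prop :=
  exists G : (Omega * Lambda)%type -> 'M[C]_n -> 'M[C]_m,
    [/\ instrument G,
        forall y (rho : 'M[C]_n), \sum_(x : Omega) G (x, y) rho = J y rho
      & forall x, \sum_(y : Lambda) induced_povm G (x, y) = A x].

End QDefs.

(* Main.v *)
Require Import Defs.
From HB Require Import structures.
From mathcomp Require Import all_boot all_order all_algebra.
From mathcomp Require Import reals complex.
From mathcomp Require Import ring.
From Stdlib Require Import ClassicalEpsilon.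
Set Implicit Arguments.
Unset Strict Implicit.
Unset Printing Implicit Defensive.
Import Order.TTheory GRing.Theory Num.Theory.
Local Open Scope ring_scope.

Section Q.
Variable C : numClosedFieldType.
Implicit Types a b : C.

Lemma adjmxK p q (A : 'M[C]_(p, q)) : adjmx (adjmx A) = A.
Proof. by apply/matrixP => i j; rewrite !mxE conjCK. Qed.

Lemma adjmxM p q r (A : 'M[C]_(p, q)) (B : 'M[C]_(q, r)) :
  adjmx (A *m B) = adjmx B *m adjmx A.
Proof. by rewrite /adjmx map_mxM trmx_mul. Qed.

Lemma adjmxD p q (A B : 'M[C]_(p, q)) : adjmx (A + B) = adjmx A + adjmx B.
Proof. by rewrite /adjmx map_mxD linearD. Qed.

Lemma adjmxZ p q a (A : 'M[C]_(p, q)) : adjmx (a *: A) = a^* *: adjmx A.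
Proof. by apply/matrixP => i j; rewrite !mxE rmorphM. Qed.

Lemma adjmxN p q (A : 'M[C]_(p, q)) : adjmx (- A) = - adjmx A.
Proof. by apply/matrixP => i j; rewrite !mxE rmorphN. Qed.

Lemma adjmx0 p q : adjmx (0 : 'M[C]_(p, q)) = 0.
Proof. by apply/matrixP => i j; rewrite !mxE rmorph0. Qed.

Lemma adjmx1 p : adjmx (1%:M : 'M[C]_p) = 1%:M.
Proof. by apply/matrixP => i j; rewrite !mxE eq_sym; case: eqP; rewrite ?rmorph1 ?rmorph0. Qed.

Lemma adjmx_sum (I : finType) p q (F : I -> 'M[C]_(p, q)) :
  adjmx (\sum_i F i) = \sum_i adjmx (F i).
Proof. by apply/matrixP => i j; rewrite !mxE !summxE rmorph_sum; apply: eq_bigr => k _; rewrite !mxE. Qed.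

Lemma adjmx_diag p (d : 'rV[C]_p) : adjmx (diag_mx d) = diag_mx (map_mx Num.conj d).
Proof. apply/matrixP => i j; rewrite !mxE eq_sym; case: eqP => [->|]; by rewrite ?mulr1n ?mulr0n ?rmorph0. Qed.

Definition qf p (M : 'M[C]_p) (u w : 'cV[C]_p) : C := (adjmx u *m M *m w) 0 0.

Lemma psd_congr p q (M : 'M[C]_p) (K : 'M[C]_(q, p)) :
  psdmx M -> psdmx (K *m M *m adjmx K).
Proof.
case=> hM pM; split; first by rewrite !adjmxM adjmxK hM mulmxA.
move=> v; have := pM (adjmx K *m v).
by rewrite adjmxM adjmxK !mulmxA.
Qed.

Lemma psd1 p : psdmx (1%:M : 'M[C]_p).
Proof.
split; first exact: adjmx1.
move=> v; rewrite mulmx1 mxE; apply: sumr_ge0 => i _.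
by rewrite !mxE mulrC mul_conjC_ge0.
Qed.

Lemma psd_add p (M N : 'M[C]_p) : psdmx M -> psdmx N -> psdmx (M + N).
Proof.
case=> hM pM [hN pN]; split; first by rewrite adjmxD hM hN.
by move=> v; rewrite mulmxDr mulmxDl mxE addr_ge0.
Qed.

Lemma psd0 p : psdmx (0 : 'M[C]_p).
Proof. by split; [rewrite adjmx0| move=> v; rewrite mulmx0 mul0mx mxE]. Qed.

Lemma psd_entry p (M : 'M[C]_p) i : psdmx M -> 0 <= M i i.
Proof.
case=> _ /(_ (delta_mx i 0)).
have -> : adjmx (delta_mx i 0 : 'cV[C]_p) = delta_mx 0 i.
  by apply/matrixP => a b; rewrite !mxE; case: eqP; case: eqP; rewrite /= ?rmorph1 ?rmorph0.
by rewrite -rowE -colE !mxE.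
Qed.

Lemma psd_tr_ge0 p (M : 'M[C]_p) : psdmx M -> 0 <= \tr M.
Proof. by move=> pM; apply: sumr_ge0 => i _; exact: psd_entry. Qed.

Lemma e00D (A B : 'M[C]_1) : (A + B) 0 0 = A 0 0 + B 0 0.
Proof. by rewrite mxE. Qed.
Lemma e00Z s (A : 'M[C]_1) : (s *: A) 0 0 = s * A 0 0.
Proof. by rewrite mxE. Qed.

Lemma psd_null p (M : 'M[C]_p) (u w : 'cV[C]_p) : psdmx M ->
  (adjmx w *m M *m w) 0 0 = 0 -> (adjmx u *m M *m w) 0 0 = 0 /\ (adjmx w *m M *m u) 0 0 = 0.
Proof.
case=> hM pM h0.
have hc : (adjmx w *m M *m u) 0 0 = ((adjmx u *m M *m w) 0 0)^*.
  have e : adjmx (adjmx u *m M *m w) = adjmx w *m M *m u.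
    by rewrite !adjmxM hM adjmxK mulmxA.
  by rewrite -e !mxE.
set a := (adjmx u *m M *m u) 0 0.
set c := (adjmx u *m M *m w) 0 0.
have c0 : c = 0.
  apply/eqP/negPn/negP => cnz.
  have a0 : 0 <= a := pM u.
  set t := - (a + 1) / (c *+ 2).
  have := pM (u + t *: w).
  have E : forall (X Y : 'M[C]_(1,p)) (Z W : 'cV[C]_p) (s r : C), ((s *: X + Y) *m M *m (r *: Z + W)) 0 0 =
     s * r * (X *m M *m Z) 0 0 + s * (X *m M *m W) 0 0 + r * (Y *m M *m Z) 0 0 + (Y *m M *m W) 0 0.
    move=> X Y Z W s r; rewrite !mulmxDl !mulmxDr -!scalemxAl -!scalemxAr.
    rewrite !e00D !e00Z.
    by rewrite mulrA addrA.
  rewrite adjmxD adjmxZ addrC [u + _]addrC E -/a h0 hc -/c mulr0 add0r.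
  have tc : t * c = - (a + 1) / 2%:R.
    by rewrite /t; field.
  have e1 : t^* * c^* = (t * c)^* by rewrite [RHS]rmorphM.
  rewrite e1 tc conj_Creal; last first.
    by rewrite rpredM ?rpredN ?rpredD ?rpredV ?ger0_real ?ler01 ?ler0n.
  have -> : - (a + 1) / 2%:R + - (a + 1) / 2%:R + a = -1.
    by field.
  by rewrite lerNr oppr0 ler10.
by rewrite hc -/c c0; split => //; rewrite conjC0.
Qed.

Lemma adj_delta p i : adjmx (delta_mx i 0 : 'cV[C]_p) = delta_mx 0 i.
Proof. by apply/matrixP => a b; rewrite !mxE; case: eqP; case: eqP; rewrite /= ?rmorph1 ?rmorph0. Qed.

Lemma qf_delta p (M : 'M[C]_p) i j :
  (adjmx (delta_mx i 0 : 'cV[C]_p) *m M *m (delta_mx j 0 : 'cV[C]_p)) 0 0 = M i j.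
Proof. by rewrite adj_delta -rowE -colE !mxE. Qed.

Lemma psd_tr0 p (M : 'M[C]_p) : psdmx M -> \tr M = 0 -> M = 0.
Proof.
move=> pM tr0.
have d0 : forall i, M i i = 0.
  move=> i; move/eqP: tr0; rewrite psumr_eq0; last by move=> k _; exact: psd_entry.
  by move/allP/(_ i (mem_index_enum _))/implyP/(_ isT)/eqP.
apply/matrixP => i j; rewrite mxE.
have := @psd_null _ M (delta_mx i 0) (delta_mx j 0) pM.
by rewrite !qf_delta => /(_ (d0 j)) [].
Qed.

Section Lin.
Variables (n m : nat) (f : 'M[C]_n -> 'M[C]_m).
Hypothesis hf : linear_map f.

Lemma lin0 : f 0 = 0.
Proof.
have e := hf 1 0 0; rewrite scale1r addr0 scale1r in e.
by apply: (@addrI _ (f 0)); rewrite addr0 -e.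
Qed.

Lemma linD X Y : f (X + Y) = f X + f Y.
Proof. by have := hf 1 X Y; rewrite !scale1r. Qed.

Lemma linZ a X : f (a *: X) = a *: f X.
Proof. by have := hf a X 0; rewrite !addr0 lin0 addr0. Qed.

Lemma linB X Y : f (X - Y) = f X - f Y.
Proof. by have := hf (-1) Y X; rewrite !scaleN1r addrC [_ + f X]addrC. Qed.

Lemma lin_sum (I : finType) (F : I -> 'M[C]_n) : f (\sum_i F i) = \sum_i f (F i).
Proof. exact: (big_morph f linD lin0). Qed.
End Lin.

Lemma linear_comp n m l (f : 'M[C]_m -> 'M[C]_l) (g : 'M[C]_n -> 'M[C]_m) :
  linear_map f -> linear_map g -> linear_map (fun X => f (g X)).
Proof. by move=> hf hg a X Y; rewrite hg hf. Qed.

Lemma linear_add n m (f g : 'M[C]_n -> 'M[C]_m) :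
  linear_map f -> linear_map g -> linear_map (fun X => f X + g X).
Proof.
move=> hf hg a X Y; rewrite hf hg scalerDr.
by rewrite -!addrA; congr (_ + _); rewrite addrCA.
Qed.

Lemma linear_conj n m (K : 'M[C]_(m, n)) : linear_map (fun X => K *m X *m adjmx K).
Proof. by move=> a X Y; rewrite mulmxDr mulmxDl -scalemxAr -scalemxAl. Qed.

Lemma adj_mxblock p q (p_ : 'I_p -> nat) (q_ : 'I_q -> nat)
   (B : forall i j, 'M[C]_(p_ i, q_ j)) :
  adjmx (\mxblock_(i, j) B i j) = \mxblock_(j, i) adjmx (B i j).
Proof. by apply/matrixP => a b; rewrite /adjmx /mxblock !mxE. Qed.

Lemma adj_mxcol p (p_ : 'I_p -> nat) r (B : forall i, 'M[C]_(p_ i, r)) :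
  adjmx (\mxcol_i B i) = \mxrow_i adjmx (B i).
Proof. by apply/matrixP => a b; rewrite /adjmx /mxcol /mxrow !mxE. Qed.

Lemma adj_mxrow p (p_ : 'I_p -> nat) r (B : forall i, 'M[C]_(r, p_ i)) :
  adjmx (\mxrow_i B i) = \mxcol_i adjmx (B i).
Proof. by apply/matrixP => a b; rewrite /adjmx /mxcol /mxrow !mxE. Qed.

Lemma ampl_comp n m l k (f : 'M[C]_m -> 'M[C]_l) (g : 'M[C]_n -> 'M[C]_m) X :
  ampl (k:=k) (fun Y => f (g Y)) X = ampl f (ampl g X).
Proof. by rewrite /ampl; apply: eq_mxblock => i j; rewrite mxblockK. Qed.

Lemma ampl_add n m k (f g : 'M[C]_n -> 'M[C]_m) X :
  ampl (k:=k) (fun Y => f Y + g Y) X = ampl f X + ampl g X.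
Proof. by rewrite /ampl mxblockD. Qed.

Lemma CP_comp n m l (f : 'M[C]_m -> 'M[C]_l) (g : 'M[C]_n -> 'M[C]_m) :
  completely_positive f -> completely_positive g ->
  completely_positive (fun X => f (g X)).
Proof. by move=> cf cg k X pX; rewrite ampl_comp; apply: cf; apply: cg. Qed.

Lemma CP_add n m (f g : 'M[C]_n -> 'M[C]_m) :
  completely_positive f -> completely_positive g ->
  completely_positive (fun X => f X + g X).
Proof. by move=> cf cg k X pX; rewrite ampl_add; apply: psd_add; [apply: cf|apply: cg]. Qed.

Lemma sum_ifl k r s t (A : 'M[C]_(r, s)) (B : 'I_k -> 'M[C]_(s, t)) i :
  \sum_j ((if i == j then A else 0) *m B j) = A *m B i.
Proof.
rewrite (bigD1 i) //= eqxx big1 ?addr0 // => j /negbTE.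
by rewrite eq_sym => ->; rewrite mul0mx.
Qed.

Lemma sum_ifr k r s t (A : 'M[C]_(s, t)) (B : 'I_k -> 'M[C]_(r, s)) i :
  \sum_j (B j *m (if j == i then A else 0)) = B i *m A.
Proof.
rewrite (bigD1 i) //= eqxx big1 ?addr0 // => j /negbTE ->.
by rewrite mulmx0.
Qed.

Lemma adj_if p q (b : bool) (K : 'M[C]_(p, q)) :
  adjmx (if b then K else 0) = if b then adjmx K else 0.
Proof. by case: b; rewrite ?adjmx0. Qed.

Lemma CP_conj n m (K : 'M[C]_(m, n)) :
  completely_positive (fun X => K *m X *m adjmx K).
Proof.
move=> k X pX.
pose bd := @mxblock _ k k (fun _ => m) (fun _ => n) (fun i j => if i == j then K else 0).
suff -> : ampl (fun X => K *m X *m adjmx K) X = bd *m X *m adjmx bd by apply: psd_congr.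
rewrite -[X in bd *m X]submxblockK /bd mul_mxblock adj_mxblock mul_mxblock /ampl.
apply: eq_mxblock => i j.
under eq_bigr do rewrite sum_ifl.
under eq_bigr do rewrite adj_if eq_sym.
by rewrite sum_ifr.
Qed.


Lemma CP_pos n m (f : 'M[C]_n -> 'M[C]_m) (rho : 'M[C]_n) :
  completely_positive f -> psdmx rho -> psdmx (f rho).
Proof.
move=> cf prho.
pose E := @mxcol C 1 (fun _ => n) n (fun _ => 1%:M : 'M[C]_n).
have pX : psdmx (E *m rho *m adjmx E) by apply: psd_congr.
have eX : E *m rho *m adjmx E = @mxblock _ 1 1 (fun _ => n) (fun _ => n) (fun _ _ => rho).
  rewrite /E adj_mxcol mxcol_mul mul_mxcol_mxrow.
  by apply: eq_mxblock => i j; rewrite mul1mx adjmx1 mulmx1.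
rewrite eX in pX.
have := cf 1%N _ pX.
have -> : ampl f (@mxblock _ 1 1 (fun _ => n) (fun _ => n) (fun _ _ => rho)) =
   @mxblock _ 1 1 (fun _ => m) (fun _ => m) (fun _ _ => f rho).
  by rewrite /ampl; apply: eq_mxblock => i j; rewrite mxblockK.
pose F := @mxcol C 1 (fun _ => m) m (fun _ => 1%:M : 'M[C]_m).
move=> /(psd_congr (adjmx F)); rewrite adjmxK /F adj_mxcol.
rewrite mul_mxrow_mxblock mul_mxrow_mxcol big_ord1.
by rewrite big_ord1 adjmx1 mul1mx mulmx1.
Qed.

Lemma tr_sum (I : finType) p (F : I -> 'M[C]_p) : \tr (\sum_i F i) = \sum_i \tr (F i).
Proof. exact: (big_morph _ (@mxtraceD _ _) (mxtrace0 _ _)). Qed.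

Definition ind n m (f : 'M[C]_n -> 'M[C]_m) : 'M[C]_n :=
  \matrix_(i, j) \tr (f (delta_mx j i)).

Lemma tr_ind n m (f : 'M[C]_n -> 'M[C]_m) rho : linear_map f ->
  \tr (f rho) = \tr (ind f *m rho).
Proof.
move=> hf; rewrite {1}[rho]matrix_sum_delta (lin_sum hf) tr_sum.
under eq_bigr do rewrite (lin_sum hf) tr_sum.
under eq_bigr do under eq_bigr do rewrite (linZ hf) mxtraceZ.
rewrite [RHS]/mxtrace; under [RHS]eq_bigr do rewrite mxE.
rewrite [RHS]exchange_big /=; apply: eq_bigr => i _; apply: eq_bigr => j _.
by rewrite mxE mulrC.
Qed.

Lemma tr_delta p (M : 'M[C]_p) i j : \tr (M *m delta_mx j i) = M i j.
Proof.
rewrite -(mul_delta_mx (0 : 'I_1)) mulmxA -colE mxtrace_mulC -rowE.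
by rewrite /mxtrace big_ord1 !mxE.
Qed.

Lemma adj_tc p q (M : 'M[C]_(p, q)) : adjmx M = (M ^t* )%sesqui.
Proof. by rewrite /adjmx map_trmx. Qed.

Lemma spectral_psd p (M : 'M[C]_p) (U := spectralmx M) (d := spectral_diag M) :
  psdmx M ->
  [/\ U *m adjmx U = 1%:M, adjmx U *m U = 1%:M, forall i, 0 <= d 0 i
    & M = adjmx U *m diag_mx d *m U].
Proof.
move=> pM; have hM := pM.1.
have nM : M \is normalmx by apply/normalmxP; rewrite -adj_tc hM.
have eM := orthomx_spectralP nM.
have uU := spectral_unitarymx M.
rewrite -/U -/d in eM uU.
have UU : U *m adjmx U = 1%:M by rewrite adj_tc; apply/unitarymxP.
have UU' : adjmx U *m U = 1%:M.
  by rewrite adj_tc -(invmx_unitary uU) mulVmx // unitarymx_unit.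
rewrite invmx_unitary // -adj_tc in eM.
split => // i.
have := psd_entry i (psd_congr U pM).
by rewrite eM !mulmxA UU mul1mx -mulmxA UU mulmx1 mxE eqxx mulr1n.
Qed.

Lemma psd_diag p (e : 'rV[C]_p) : (forall j, 0 <= e 0 j) -> psdmx (diag_mx e).
Proof.
move=> he; split.
  rewrite adjmx_diag; congr diag_mx; apply/matrixP => i j.
  by rewrite !mxE ord1 conj_Creal // ger0_real.
move=> v; rewrite mul_mx_diag mxE; apply: sumr_ge0 => j _.
rewrite !mxE mulrAC mulr_ge0 //.
by rewrite mulrC mul_conjC_ge0.
Qed.

Section FC.
Variables (p : nat) (U : 'M[C]_p).
Hypotheses (UU : U *m adjmx U = 1%:M) (UU' : adjmx U *m U = 1%:M).

Definition fc (g : 'I_p -> C) := adjmx U *m diag_mx (\row_j g j) *m U.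

Lemma fc_mul g h : fc g *m fc h = fc (fun j => g j * h j).
Proof.
rewrite /fc !mulmxA -[_ *m U *m adjmx U]mulmxA UU mulmx1 -[_ *m diag_mx _ *m diag_mx _]mulmxA.
by rewrite mulmx_diag; congr (_ *m diag_mx _ *m _); apply/matrixP => i j; rewrite !mxE.
Qed.

Lemma fc_add g h : fc g + fc h = fc (fun j => g j + h j).
Proof.
rewrite /fc -mulmxDl -mulmxDr; congr (_ *m _ *m _).
by apply/matrixP => i j; rewrite !mxE mulrnDl.
Qed.

Lemma fc_adj g : adjmx (fc g) = fc (fun j => (g j)^*).
Proof.
rewrite /fc !adjmxM adjmxK adjmx_diag mulmxA; congr (_ *m diag_mx _ *m _).
by apply/matrixP => i j; rewrite !mxE.
Qed.

Lemma fc_ext g h : g =1 h -> fc g = fc h.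
Proof. by move=> e; rewrite /fc; congr (_ *m diag_mx _ *m _); apply/matrixP => i j; rewrite !mxE e. Qed.

Lemma fc1 : fc (fun _ => 1) = 1%:M.
Proof.
rewrite /fc; have -> : (\row_(j < p) (1 : C)) = const_mx 1 by apply/matrixP => i j; rewrite !mxE.
by rewrite diag_const_mx mulmx1.
Qed.

Lemma fc0 : fc (fun _ => 0) = 0.
Proof.
rewrite /fc; have -> : (\row_(j < p) (0 : C)) = 0 by apply/matrixP => i j; rewrite !mxE.
by rewrite linear0 mulmx0 mul0mx.
Qed.

Lemma psd_fc g : (forall j, 0 <= g j) -> psdmx (fc g).
Proof.
move=> hg; rewrite /fc -{2}[U]adjmxK; apply: psd_congr; apply: psd_diag => j.
by rewrite mxE.
Qed.
End FC.

Lemma psd_sqrt_spec p (M : 'M[C]_p) : psdmx M ->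
  psdmx (psd_sqrt M) /\ psd_sqrt M *m psd_sqrt M = M.
Proof.
move=> pM; rewrite /psd_sqrt; apply: (@epsilon_spec _ (inhabits (0 : 'M[C]_p)) (fun B => psdmx B /\ B *m B = M)).
have [UU UU' d0 eM] := spectral_psd pM.
exists (fc (spectralmx M) (fun j => sqrtC (spectral_diag M 0 j))); split.
  by apply: psd_fc => j; rewrite sqrtC_ge0.
rewrite fc_mul // [RHS]eM /fc; congr (_ *m diag_mx _ *m _); apply/matrixP => i j.
by rewrite !mxE ord1 -expr2 sqrtCK.
Qed.

Lemma cjV (x : C) : (x^-1)^* = (x^*)^-1. Proof. exact: fmorphV. Qed.
Lemma cjM (x y : C) : (x * y)^* = x^* * y^*. Proof. exact: rmorphM. Qed.
Lemma cjB (x y : C) : (x - y)^* = x^* - y^*. Proof. exact: rmorphB. Qed.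
Lemma cj1 : (1 : C)^* = 1. Proof. exact: rmorph1. Qed.

Definition pinvQ p (B : 'M[C]_p) :=
  fc (spectralmx B) (fun j => (spectral_diag B 0 j)^-1).
Definition suppP p (B : 'M[C]_p) :=
  fc (spectralmx B) (fun j => spectral_diag B 0 j * (spectral_diag B 0 j)^-1).
Definition kerP p (B : 'M[C]_p) :=
  fc (spectralmx B) (fun j => 1 - spectral_diag B 0 j * (spectral_diag B 0 j)^-1).

Section Pinv.
Variables (p : nat) (B : 'M[C]_p).
Hypothesis pB : psdmx B.

Local Notation U := (spectralmx B).
Local Notation b j := (spectral_diag B 0 j).
Let UU : U *m adjmx U = 1%:M. Proof. by case: (spectral_psd pB). Qed.
Let UU' : adjmx U *m U = 1%:M. Proof. by case: (spectral_psd pB). Qed.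
Let b0 j : 0 <= b j. Proof. by case: (spectral_psd pB). Qed.
Let bc j : (b j)^* = b j. Proof. by rewrite conj_Creal // ger0_real. Qed.

Lemma eB : B = fc U (fun j => b j).
Proof.
case: (spectral_psd pB) => _ _ _ {1}->; rewrite /fc; congr (_ *m diag_mx _ *m _).
by apply/matrixP => i j; rewrite !mxE ord1.
Qed.

Lemma QB : pinvQ B *m B = suppP B.
Proof. by rewrite {2}eB fc_mul //; apply: fc_ext => j; rewrite mulrC. Qed.

Lemma adjQ : adjmx (pinvQ B) = pinvQ B.
Proof. by rewrite fc_adj //; apply: fc_ext => j; rewrite cjV bc. Qed.

Lemma adjP : adjmx (suppP B) = suppP B.
Proof. by rewrite fc_adj //; apply: fc_ext => j; rewrite cjM cjV bc. Qed.

Lemma adjK : adjmx (kerP B) = kerP B.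
Proof. by rewrite fc_adj //; apply: fc_ext => j; rewrite cjB cj1 cjM cjV bc. Qed.

Let bz j : (1 - b j * (b j)^-1) * b j = 0.
Proof. by have [->|nz] := eqVneq (b j) 0; rewrite ?mulr0 // mulfV // subrr mul0r. Qed.

Lemma KB : kerP B *m B = 0.
Proof. by rewrite {2}eB fc_mul // -(fc0 U); apply: fc_ext. Qed.

Lemma BK : B *m kerP B = 0.
Proof. by rewrite {1}eB fc_mul // -(fc0 U); apply: fc_ext => j; rewrite mulrC. Qed.

Lemma KK : kerP B *m kerP B = kerP B.
Proof.
rewrite fc_mul //; apply: fc_ext => j.
by have [->|nz] := eqVneq (b j) 0; [rewrite mul0r subr0 mulr1 | rewrite mulfV // subrr mulr0].
Qed.

Lemma PK : suppP B + kerP B = 1%:M.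
Proof. by rewrite fc_add // -(fc1 UU') ; apply: fc_ext => j; rewrite addrC subrK. Qed.

Lemma QBBQ : pinvQ B *m (B *m B) *m pinvQ B = suppP B.
Proof.
rewrite {2 3}eB !fc_mul //; apply: fc_ext => j.
have [->|nz] := eqVneq (b j) 0; first by rewrite invr0 !(mul0r, mulr0).
by field.
Qed.
End Pinv.

Lemma sum_ifl' k r s t (A : 'M[C]_(r, s)) (B : 'I_k -> 'M[C]_(s, t)) i :
  \sum_j ((if j == i then A else 0) *m B j) = A *m B i.
Proof.
rewrite (bigD1 i) //= eqxx big1 ?addr0 // => j /negbTE ->.
by rewrite mul0mx.
Qed.

Lemma qf_block k m (Bl : 'I_k -> 'I_k -> 'M[C]_m) i0 i1 (x y : 'cV[C]_m) :
  adjmx (@mxcol _ k (fun _ => m) 1 (fun i => if i == i0 then x else 0)) *m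
    @mxblock _ k k (fun _ => m) (fun _ => m) Bl *m
    @mxcol _ k (fun _ => m) 1 (fun i => if i == i1 then y else 0)
  = adjmx x *m Bl i0 i1 *m y.
Proof.
rewrite adj_mxcol; under eq_mxrow do rewrite adj_if.
rewrite mul_mxrow_mxblock mul_mxrow_mxcol.
under eq_bigr do rewrite sum_ifl'.
by rewrite sum_ifr.
Qed.

Lemma block_null k m (Bl : 'I_k -> 'I_k -> 'M[C]_m) i0 i1 :
  psdmx (@mxblock _ k k (fun _ => m) (fun _ => m) Bl) -> Bl i1 i1 = 0 ->
  Bl i0 i1 = 0 /\ Bl i1 i0 = 0.
Proof.
move=> pY h11.
suff H : forall a b : 'I_m, Bl i0 i1 a b = 0 /\ Bl i1 i0 b a = 0.
  by split; apply/matrixP => a b; rewrite mxE; have [] := H a b; have [] := H b a.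
move=> a b; rewrite -(qf_delta (Bl i0 i1) a b) -(qf_delta (Bl i1 i0) b a).
have := @psd_null _ _ (@mxcol _ k (fun _ => m) 1 (fun i => if i == i0 then (delta_mx a 0 : 'cV[C]_m) else 0))
  (@mxcol _ k (fun _ => m) 1 (fun i => if i == i1 then (delta_mx b 0 : 'cV[C]_m) else 0)) pY.
rewrite !qf_block h11 mulmx0 mul0mx mxE => /(_ erefl) [-> ->].
by [].
Qed.

Lemma kill_ker n m (f : 'M[C]_n -> 'M[C]_m) (K : 'M[C]_n) :
  completely_positive f -> f (adjmx K *m K) = 0 ->
  forall X, f (adjmx X *m K) = 0 /\ f (adjmx K *m X) = 0.
Proof.
move=> cf h X.
pose W := @mxrow C 2 (fun _ => n) n (fun j => if j == 0 then X else K).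
have pZ : psdmx (adjmx W *m W).
  by have := psd_congr (adjmx W) (psd1 n); rewrite mulmx1 adjmxK.
have eZ : adjmx W *m W = @mxblock _ 2 2 (fun _ => n) (fun _ => n)
     (fun i j => adjmx (if i == 0 then X else K) *m (if j == 0 then X else K)).
  by rewrite /W adj_mxrow mul_mxcol_mxrow.
rewrite eZ in pZ; have := cf 2%N _ pZ.
rewrite /ampl; under eq_mxblock do rewrite mxblockK.
move=> /(@block_null 2 m _ 0 1) /=.
by apply.
Qed.

Lemma tr_conjB p (M rho : 'M[C]_p) : psdmx M ->
  \tr (psd_sqrt M *m rho *m adjmx (psd_sqrt M)) = \tr (M *m rho).
Proof.
move=> pM; have [[hB _] eB] := psd_sqrt_spec pM.
by rewrite hB mxtrace_mulC mulmxA eB.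
Qed.

Lemma tr_psd_mul p (M rho : 'M[C]_p) : psdmx M -> psdmx rho -> 0 <= \tr (M *m rho).
Proof.
move=> pM pr; rewrite -tr_conjB //; apply: psd_tr_ge0; apply: psd_congr => //.
Qed.

Lemma sum_trA (Omega : finType) n (A : Omega -> 'M[C]_n) rho : povm A ->
  \sum_x \tr (A x *m rho) = \tr rho.
Proof. by case=> _ sA; rewrite -tr_sum -mulmx_suml sA mul1mx. Qed.

Lemma trA_le (Omega : finType) n (A : Omega -> 'M[C]_n) rho x : povm A ->
  psdmx rho -> \tr (A x *m rho) <= \tr rho.
Proof.
move=> hA pr; rewrite -(sum_trA rho hA) (bigD1 x) //= lerDl sumr_ge0 // => x' _.
by apply: tr_psd_mul => //; case: hA.
Qed.

Theorem main_gen (Omega Lambda : finType) (n m : nat)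
  (A : Omega -> 'M[C]_n) (J : Lambda -> 'M[C]_n -> 'M[C]_m) :
  povm A -> instrument J ->
  (compatible A J <-> postprocessing J (luders A)).
Proof.
move=> hA [Jl Jc Jt Js]; have [pA sA] := hA.
pose B x := psd_sqrt (A x).
have pB x : psdmx (B x) := (psd_sqrt_spec (pA x)).1.
have eB x : B x *m B x = A x := (psd_sqrt_spec (pA x)).2.
have lud x rho : luders A x rho = B x *m rho *m adjmx (B x) by rewrite (pB x).1.
split.
- case=> G [[Gl Gc Gt Gs] Gm Gi].
  pose Q x := pinvQ (B x); pose K x := kerP (B x); pose P x := suppP (B x).
  exists (fun x y s => G (x, y) (Q x *m s *m adjmx (Q x)) + J y (K x *m s *m adjmx (K x))).
  have F1 x rho : \sum_y \tr (G (x, y) rho) = \tr (A x *m rho).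
    under eq_bigr do rewrite (tr_ind _ (Gl _)).
    by rewrite -tr_sum -mulmx_suml -Gi.
  have Gpos q rho : psdmx rho -> 0 <= \tr (G q rho).
    by move=> pr; apply/psd_tr_ge0/CP_pos.
  have Jpos y rho : psdmx rho -> 0 <= \tr (J y rho).
    by move=> pr; apply/psd_tr_ge0/CP_pos.
  have pK x : psdmx (K x).
    by have := psd_congr (adjmx (K x)) (psd1 n); rewrite mulmx1 adjmxK adjK ?KK.
  have Gker x y X : G (x, y) (K x *m X) = 0 /\ G (x, y) (X *m K x) = 0.
    have h0 : G (x, y) (adjmx (K x) *m K x) = 0.
      rewrite adjK ?KK //; apply: psd_tr0; first by apply: CP_pos; [exact: Gc | exact: pK].
      have : \sum_y' \tr (G (x, y') (K x)) = 0.
        by rewrite F1 -eB -mulmxA BK // mulmx0 mxtrace0.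
      move/eqP; rewrite psumr_eq0 => [/allP/(_ y (mem_index_enum _))/implyP/(_ isT)/eqP //|y' _].
      exact: Gpos.
    have [_ h1] := kill_ker (Gc (x, y)) h0 X.
    have [h2 _] := kill_ker (Gc (x, y)) h0 (adjmx X).
    by rewrite adjK // in h1; rewrite adjmxK in h2.
  split.
  + have tot x s : \tr (\sum_y (G (x, y) (Q x *m s *m adjmx (Q x)) + J y (K x *m s *m adjmx (K x)))) = \tr s.
      rewrite tr_sum; under eq_bigr do rewrite mxtraceD.
      rewrite big_split /= F1 -tr_sum Js adjQ // adjK //.
      have e1 (Qm Am Sm : 'M[C]_n) : \tr (Am *m (Qm *m Sm *m Qm)) = \tr (Qm *m Am *m Qm *m Sm).
        by rewrite mulmxA mxtrace_mulC !mulmxA.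
      have e2 (Km Sm : 'M[C]_n) : \tr (Km *m Sm *m Km) = \tr (Km *m Km *m Sm).
        by rewrite mxtrace_mulC mulmxA.
      rewrite e1 e2 -eB QBBQ // KK // -mxtraceD.
      by rewrite -mulmxDl PK // mul1mx.
    move=> x; split.
    * move=> y; apply: linear_add; apply: linear_comp => //; exact: linear_conj.
    * move=> y; apply: CP_add; apply: CP_comp => //; exact: CP_conj.
    * move=> y s ps; rewrite -(tot x s) tr_sum (bigD1 y) //= lerDl sumr_ge0 // => y' _.
      by rewrite mxtraceD addr_ge0 // ?Gpos ?Jpos //; apply: psd_congr.
    * exact: tot.
  + move=> y rho; rewrite -Gm; apply: eq_bigr => x _; rewrite lud.
    rewrite !mulmxA KB // !mul0mx (lin0 (Jl _)) addr0.
    have QBe : Q x *m B x = P x by rewrite QB.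
    have BQe : adjmx (B x) *m adjmx (Q x) = P x.
      by rewrite -adjmxM QBe adjP.
    rewrite QBe -mulmxA BQe.
    have -> : G (x, y) rho = G (x, y) ((P x + K x) *m rho *m (P x + K x)).
      by rewrite PK // mul1mx mulmx1.
    rewrite !(mulmxDl, mulmxDr) !(linD (Gl _)).
    have [e1 _] := Gker x y (rho *m P x); rewrite mulmxA in e1.
    have [_ e2] := Gker x y (P x *m rho).
    have [_ e3] := Gker x y (K x *m rho).
    by rewrite e1 e2 e3 !addr0.
- case=> Rr [hR hJ].
  have Rs x : forall s, \tr (\sum_y Rr x y s) = \tr s by case: (hR x).
  exists (fun q rho => Rr q.1 q.2 (B q.1 *m rho *m adjmx (B q.1))).
  split.
  + split.
    * move=> [x y] /=; case: (hR x) => Rl _ _ _.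
      by apply: linear_comp => //; exact: linear_conj.
    * move=> [x y] /=; case: (hR x) => _ Rc _ _.
      by apply: CP_comp => //; exact: CP_conj.
    * move=> [x y] rho pr /=; case: (hR x) => _ _ Rt _.
      apply: le_trans (Rt y _ (psd_congr _ pr)) _.
      by rewrite tr_conjB //; apply: trA_le.
    * move=> rho; rewrite tr_sum.
      rewrite -(pair_bigA _ (fun x y => \tr (Rr x y (B x *m rho *m adjmx (B x))))) /=.
      under eq_bigr => x _ do rewrite -tr_sum Rs tr_conjB //.
      exact: sum_trA.
  + by move=> y rho; rewrite hJ; apply: eq_bigr => x _; rewrite lud.
  + move=> x; apply/matrixP => i j; rewrite summxE.
    under eq_bigr do rewrite mxE.
    by rewrite -tr_sum /= Rs tr_conjB // tr_delta.
Qed.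
End Q.

Unset Implicit Arguments.
Set Strict Implicit.

Theorem corollary3 (R : realType) (Omega Lambda : finType) (n m : nat)
  (A : Omega -> 'M[R[i]]_n) (J : Lambda -> 'M[R[i]]_n -> 'M[R[i]]_m) :
  povm A -> instrument J ->
  (compatible A J <-> postprocessing J (luders A)).
Proof.
exact: main_gen.
Qed.
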